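(* Let $p$ be a prime, let $1\le m_1\le\cdots\le m_n$ be integers and $G=\mathbb{Z}_{p^{m_1}}\times\cdots\times\mathbb{Z}_{p^{m_n}}$, with $g_i$ a fixed generator of the $i$-th factor, so every element of $G$ is written $g_1^{s_1}\cdots g_n^{s_n}$ with $s_i\in\mathbb{Z}$. Let $A$ be a finite abelian $p$-group (written additively). Let $\Lambda=\{(i,j)\colon 1\le i<j\le n\}$, and for $\lambda=(i,j)\in\Lambda$ write $\dot\lambda=i$, $\ddot\lambda=j$. For $\mathbf{a}=(a_1,\ldots,a_n)\in A^n$ and $\mathbf{b}=(b_\lambda)_{\lambda\in\Lambda}\in A^\Lambda$ with $p^{m_{\dot\lambda}}b_\lambda=0$ for all $\lambda$, define $\alpha_{\mathbf{a},\mathbf{b}}\colon G\times G\to A$ by $$\alpha_{\mathbf{a},\mathbf{b}}(g_1^{s_1}\cdots g_n^{s_n},g_1^{t_1}\cdots g_n^{t_n})=\sum_{i=1}^n\Big[\frac{\langle s_i\rangle_{p^{m_i}}+\langle t_i\rangle_{p^{m_i}}}{p^{m_i}}\Big]a_i-\sum_{\lambda\in\Lambda}t_{\dot\lambda}s_{\ddot\lambda}b_\lambda .$$ Then each such $\alpha_{\mathbf{a},\mathbf{b}}$ is a $2$-cocycle, and every element of $H^2(G;A)$ is represented by $\alpha_{\mathbf{a},\mathbf{b}}$ for some $\mathbf{a}\in A^n$ and some $\mathbf{b}$ with $b_\lambda\in\ker(p^{m_{\dot\lambda}})$ for all $\lambda\in\Lambda$. For such $\mathbf{a},\mathbf{b}$,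 $[\alpha_{\mathbf{a},\mathbf{b}}]=0$ in $H^2(G;A)$ if and only if $a_i\in p^{m_i}A$ for all $i\in\{1,\ldots,n\}$ and $b_\lambda=0$ for all $\lambda\in\Lambda$. Consequently $[\alpha_{\mathbf{a},\mathbf{b}}]\mapsto\big((a_i+p^{m_i}A)_{i},(b_\lambda)_{\lambda}\big)$ gives an isomorphism $$H^2(G;A)\cong\prod_{i=1}^n A/p^{m_i}A\times\prod_{\lambda\in\Lambda}\ker\big(A\xrightarrow{\,p^{m_{\dot\lambda}}\,}A\big).$$
   Context: $[x]$ denotes the largest integer not exceeding $x$; for integers $q>0$ and $i$, $\langle i\rangle_q\in\{0,\ldots,q-1\}$ is the remainder of $i$ modulo $q$. $\ker(p^k)$ denotes the kernel of the endomorphism $a\mapsto p^ka$ of $A$. *)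

(* Defs.v *)
From HB Require Import structures.
From mathcomp Require Import all_boot all_algebra.

Import GRing.Theory.
Local Open Scope ring_scope.

(* G = Z_{p^{m_0}} x ... x Z_{p^{m_{n-1}}}, an element g_1^{s_1}...g_n^{s_n}
   is represented by its vector of canonical exponents s_i = <s_i>_{p^{m_i}}. *)
Definition Gp (p n : nat) (m : 'I_n -> nat) :=
  {dffun forall i : 'I_n, 'I_(p ^ m i)}.

Lemma ord_pos (k : nat) (x : 'I_k) : (0 < k)%N.
Proof. exact: leq_ltn_trans (leq0n x) (ltn_ord x). Qed.

Definition ordadd (k : nat) (x y : 'I_k) : 'I_k :=
  Ordinal (ltn_pmod (x + y)%N (ord_pos k x)).

Definition Gmul (p n : nat) (m : 'I_n -> nat) (s t : Gp p n m) : Gp p n m :=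
  @finfun _ (fun i : 'I_n => 'I_(p ^ m i)) (fun i => ordadd (p ^ m i) (s i) (t i)).

Definition is_cocycle (p n : nat) (m : 'I_n -> nat) (A : zmodType)
  (f : Gp p n m -> Gp p n m -> A) : Prop :=
  forall g h k, f h k - f (Gmul p n m g h) k + f g (Gmul p n m h k) - f g h = 0.

Definition is_coboundary (p n : nat) (m : 'I_n -> nat) (A : zmodType)
  (f : Gp p n m -> Gp p n m -> A) : Prop :=
  exists c : Gp p n m -> A, forall g h, f g h = c h - c (Gmul p n m g h) + c g.

Definition cohomologous (p n : nat) (m : 'I_n -> nat) (A : zmodType)
  (f f' : Gp p n m -> Gp p n m -> A) : Prop :=
  is_coboundary p n m A (fun g h => f g h - f' g h).

(* b_lambda for lambda = (i,j), i < j, is stored as b i j (other entries unused) *)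
Definition valid_b (p n : nat) (m : 'I_n -> nat) (A : zmodType)
  (b : 'I_n -> 'I_n -> A) : Prop :=
  forall i j : 'I_n, (i < j)%N -> b i j *+ (p ^ m i) = 0.

Definition alpha (p n : nat) (m : 'I_n -> nat) (A : zmodType)
  (a : 'I_n -> A) (b : 'I_n -> 'I_n -> A) (s t : Gp p n m) : A :=
  \sum_(i < n) a i *+ ((s i + t i) %/ p ^ m i)%N
  - \sum_(i < n) \sum_(j < n | (i < j)%N) b i j *+ (t i * s j)%N.

Definition in_pmul (A : zmodType) (p k : nat) (x : A) : Prop :=
  exists y : A, x = y *+ (p ^ k).

(* Main.v *)
Set Warnings "-notation-overridden,-ambiguous-paths,-redundant-canonical-projection,-notation-incompatible-prefix".
Require Import Defs.
From HB Require Import structures.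
From mathcomp Require Import all_boot all_algebra.
From mathcomp Require Import fingroup commutator zify.
Import GRing.Theory.
Local Open Scope ring_scope.


Lemma Npos (p n : nat) (m : 'I_n -> nat) (hp : (0 < p)%N) (i : 'I_n) : (0 < p ^ m i)%N.
Proof. by rewrite expn_gt0 hp. Qed.

Definition Gz (p n : nat) (m : 'I_n -> nat) (hp : (0 < p)%N) : Gp p n m :=
  @finfun _ (fun i : 'I_n => 'I_(p ^ m i)) (fun i => Ordinal (Npos _ _ m hp i)).

Definition Ginv (p n : nat) (m : 'I_n -> nat) (hp : (0 < p)%N) (g : Gp p n m) : Gp p n m :=
  @finfun _ (fun i : 'I_n => 'I_(p ^ m i))
    (fun i => Ordinal (ltn_pmod (p ^ m i - g i)%N (Npos _ _ m hp i))).

Lemma GmulE p n m (g h : Gp p n m) i : (Gmul p n m g h i : nat) = ((g i + h i) %% p ^ m i)%N.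
Proof. by rewrite /Gmul ffunE. Qed.
Lemma GzE p n m hp i : (Gz p n m hp i : nat) = 0%N.
Proof. by rewrite /Gz ffunE. Qed.
Lemma GinvE p n m hp (g : Gp p n m) i : (Ginv p n m hp g i : nat) = ((p ^ m i - g i) %% p ^ m i)%N.
Proof. by rewrite /Ginv ffunE. Qed.
Lemma Gp_eq p n m (g h : Gp p n m) : (forall i, (g i : nat) = h i) -> g = h.
Proof. by move=> e; apply/ffunP => i; apply/val_inj/e. Qed.

Lemma GmulA p n m : associative (Gmul p n m).
Proof. by move=> g h k; apply: Gp_eq => i; rewrite !GmulE modnDml modnDmr addnA. Qed.
Lemma GmulC p n m : commutative (Gmul p n m).
Proof. by move=> g h; apply: Gp_eq => i; rewrite !GmulE addnC. Qed.
Lemma Gmul0g p n m hp (g : Gp p n m) : Gmul p n m (Gz p n m hp) g = g.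
Proof. by apply: Gp_eq => i; rewrite GmulE GzE add0n modn_small. Qed.
Lemma Gmulg0 p n m hp (g : Gp p n m) : Gmul p n m g (Gz p n m hp) = g.
Proof. by rewrite GmulC Gmul0g. Qed.
Lemma GmulVg p n m hp (g : Gp p n m) : Gmul p n m (Ginv p n m hp g) g = Gz p n m hp.
Proof.
apply: Gp_eq => i; rewrite GmulE GinvE GzE modnDml subnK ?modnn //.
exact: ltnW.
Qed.

Definition ext (p n : nat) (m : 'I_n -> nat) (A : finZmodType) (hp : (0 < p)%N)
  (f : Gp p n m -> Gp p n m -> A) (hf : is_cocycle p n m A f)
  (h0 : f (Gz p n m hp) (Gz p n m hp) = 0) : Type := (A * Gp p n m)%type.

HB.instance Definition _ p n m A hp f hf h0 :=
  Finite.copy (@ext p n m A hp f hf h0) (A * Gp p n m)%type.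

Lemma cocycle_f0 p n m A hp f (hf : is_cocycle p n m A f) (h0 : f (Gz p n m hp) (Gz p n m hp) = 0) g :
  f (Gz p n m hp) g = 0 /\ f g (Gz p n m hp) = 0.
Proof.
split.
  have := hf (Gz p n m hp) (Gz p n m hp) g.
  by rewrite !Gmul0g h0 subr0 subrK.
have := hf g (Gz p n m hp) (Gz p n m hp).
by rewrite !Gmulg0 h0 sub0r addNr sub0r => /eqP; rewrite oppr_eq0 => /eqP.
Qed.

Lemma cocycle_eq p n m A f (hf : is_cocycle p n m A f) g h k :
  f g h + f (Gmul p n m g h) k = f h k + f g (Gmul p n m h k).
Proof.
have := hf g h k; move/eqP; rewrite subr_eq0 => /eqP <-.
by rewrite addrAC subrK.
Qed.

Section ExtGroup.
Variables (p n : nat) (m : 'I_n -> nat) (A : finZmodType) (hp : (0 < p)%N)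
  (f : Gp p n m -> Gp p n m -> A) (hf : is_cocycle p n m A f)
  (h0 : f (Gz p n m hp) (Gz p n m hp) = 0).
Local Notation E := (@ext p n m A hp f hf h0).

Definition emul (x y : E) : E := (x.1 + y.1 + f x.2 y.2, Gmul p n m x.2 y.2).
Definition eone : E := (0, Gz p n m hp).
Definition einv (x : E) : E := (- x.1 - f (Ginv p n m hp x.2) x.2, Ginv p n m hp x.2).

Lemma emulA : associative emul.
Proof.
move=> [x g] [y h] [z k]; rewrite /emul /= GmulA; congr (_, _).
rewrite -!addrA -(cocycle_eq _ _ _ _ _ hf g h k).
by congr (_ + (_ + _)); rewrite addrCA.
Qed.

Lemma emul1 : left_id eone emul.
Proof.
move=> [x g]; rewrite /emul /= Gmul0g add0r.
by rewrite (proj1 (cocycle_f0 _ _ _ _ _ _ hf h0 g)) addr0.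
Qed.

Lemma emulV : left_inverse eone einv emul.
Proof.
move=> [x g]; rewrite /emul /eone /= GmulVg; congr (_, _).
by rewrite addrAC subrK addrC subrr.
Qed.

HB.instance Definition _ := Finite_isGroup.Build E emulA emul1 emulV.
End ExtGroup.



Close Scope ring_scope.
Set Implicit Arguments. Unset Strict Implicit.
Open Scope group_scope.

Lemma mulgA' (gT : finGroupType) (x y z : gT) : x * (y * z) = x * y * z.
Proof. exact: mulgA. Qed.

Definition central (gT : finGroupType) (x : gT) := forall y : gT, commute x y.

Lemma central1 (gT : finGroupType) : central (1 : gT).
Proof. by move=> y; apply/commute_sym/commute1. Qed.

Lemma centralM (gT : finGroupType) (x y : gT) : central x -> central y -> central (x * y).
Proof.
by move=> cx cy z; apply/commute_sym/commuteM; apply/commute_sym.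
Qed.

Lemma centralX (gT : finGroupType) (x : gT) k : central x -> central (x ^+ k).
Proof. by move=> cx z; apply/commute_sym/commuteX/commute_sym. Qed.

Lemma central_prod (gT : finGroupType) (F : nat -> gT) a b :
  (forall i, central (F i)) -> central (\prod_(a <= i < b) F i).
Proof.
move=> cF; elim/big_ind: _ => //; [exact: central1 | exact: centralM].
Qed.

Lemma commXX (gT : finGroupType) (x y : gT) a b : central [~ x, y] ->
  x ^+ a * y ^+ b = y ^+ b * x ^+ a * [~ x, y] ^+ (a * b).
Proof.
move=> c.
have e1 : [~ x, y ^+ b] = [~ x, y] ^+ b by apply: commgX; apply/commute_sym.
rewrite commgC commXg; last by rewrite e1; apply/commute_sym/centralX.
by rewrite e1 -expgM mulnC.
Qed.

Definition Pr (gT : finGroupType) (u : nat -> gT) (s : nat -> nat) r :=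
  \prod_(0 <= i < r) u i ^+ s i.

Lemma Pr0 (gT : finGroupType) (u : nat -> gT) s : Pr u s 0 = 1.
Proof. by rewrite /Pr big_geq. Qed.

Lemma PrS (gT : finGroupType) (u : nat -> gT) s r : Pr u s r.+1 = Pr u s r * u r ^+ s r.
Proof. by rewrite /Pr big_nat_recr. Qed.

Lemma move_past (gT : finGroupType) (x : gT) (u : nat -> gT) a t r :
  (forall i, central [~ x, u i]) ->
  x ^+ a * Pr u t r = Pr u t r * x ^+ a * \prod_(0 <= i < r) [~ x, u i] ^+ (a * t i).
Proof.
move=> c; elim: r => [|r IH]; first by rewrite !Pr0 big_geq // !mulg1 mul1g.
have cC : central (\prod_(0 <= i < r) [~ x, u i] ^+ (a * t i)).
  by apply: central_prod => i; apply: centralX.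
rewrite PrS big_nat_recr //= mulgA' IH -!mulgA'; congr (_ * _).
rewrite (cC (u r ^+ t r)) [LHS]mulgA' commXX // -!mulgA'; congr (_ * (_ * _)).
exact: (centralX _ (c r)).
Qed.

Lemma prod_formula (gT : finGroupType) (u : nat -> gT) (N : nat -> nat) (s t : nat -> nat) r :
  (forall i j, central [~ u i, u j]) -> (forall i, central (u i ^+ N i)) ->
  Pr u s r * Pr u t r =
  \prod_(0 <= i < r) (u i ^+ N i) ^+ ((s i + t i) %/ N i) *
  \prod_(0 <= j < r) \prod_(0 <= i < j) [~ u j, u i] ^+ (t i * s j) *
  Pr u (fun i => (s i + t i) %% N i) r.
Proof.
move=> cc cN; elim: r => [|r IH]; first by rewrite !Pr0 !big_geq // !mulg1.
rewrite !PrS !big_nat_recr //=.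
set x := u r.
set Cc := \prod_(0 <= i < r) (u i ^+ N i) ^+ ((s i + t i) %/ N i).
set Cb := \prod_(0 <= j < r) \prod_(0 <= i < j) [~ u j, u i] ^+ (t i * s j).
set X := (x ^+ N r) ^+ ((s r + t r) %/ N r).
set Q := Pr u (fun i => (s i + t i) %% N i) r.
set Ps := Pr u s r. set Pt := Pr u t r.
set D := \prod_(0 <= i < r) [~ x, u i] ^+ (s r * t i).
have eD : \prod_(0 <= i < r) [~ x, u i] ^+ (t i * s r) = D.
  by apply: eq_bigr => i _; rewrite mulnC.
have cD : central D by apply: central_prod => i; apply: centralX; apply: cc.
have ex : x ^+ s r * x ^+ t r = X * x ^+ ((s r + t r) %% N r).
  by rewrite -expgD /X -expgM -expgD mulnC -divn_eq.
have cX : central X by apply: centralX; apply: cN.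
have cCc : central Cc by apply: central_prod => i; apply: centralX; apply: cN.
have cCb : central Cb.
  by apply: central_prod => j; apply: central_prod => i; apply: centralX; apply: cc.
rewrite eD.
have L1 : Ps * x ^+ s r * (Pt * x ^+ t r) = Ps * Pt * x ^+ s r * D * x ^+ t r.
  rewrite -!mulgA'; congr (_ * _); rewrite [LHS]mulgA' move_past; last by move=> i; apply: cc.
  by rewrite -!mulgA'.
rewrite L1 IH -/Q -/Cc -/Cb -!mulgA'; congr (Cc * _).
rewrite (cD (x ^+ t r)) [x ^+ s r * _]mulgA' ex (cD (Q * _)) -!mulgA'.
rewrite [RHS]mulgA' (cX Cb) -mulgA'; congr (Cb * _).
by rewrite [RHS]mulgA' (cX Q) -mulgA'.
Qed.

Close Scope group_scope.
Unset Implicit Arguments.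
Set Strict Implicit.
Local Open Scope ring_scope.


Section Part2.
Variables (p n : nat) (m : 'I_n -> nat) (A : finZmodType) (hp : (0 < p)%N)
  (f : Gp p n m -> Gp p n m -> A) (hf : is_cocycle p n m A f)
  (h0 : f (Gz p n m hp) (Gz p n m hp) = 0).
Local Notation E := (@ext p n m A hp f hf h0).
Local Notation G := (Gp p n m).
Local Notation N i := (p ^ m i)%N.
Local Notation "0g" := (Gz p n m hp).
Local Notation Gm := (Gmul p n m).

Definition mk (x : A) (g : G) : E := (x, g).
Definition iota (x : A) : E := mk x 0g.

Lemma mulE x g y h : (mk x g * mk y h)%g = mk (x + y + f g h) (Gm g h).
Proof. by []. Qed.

Lemma mkE (z : E) : z = mk z.1 z.2.
Proof. by case: z. Qed.

Lemma oneE : (1%g : E) = iota 0.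
Proof. by []. Qed.

Lemma iotaM x y : (iota x * iota y)%g = iota (x + y).
Proof. by rewrite /iota mulE Gmul0g h0 addr0. Qed.

Lemma iota_central x : central (iota x).
Proof.
move=> z; rewrite /commute /iota (mkE z) !mulE Gmul0g Gmulg0 /=.
have [e1 e2] := cocycle_f0 _ _ _ _ _ _ hf h0 z.2.
by rewrite e1 e2 (addrC x).
Qed.

Lemma iotaX x k : (iota x ^+ k)%g = iota (x *+ k).
Proof.
elim: k => [|k IH]; first by rewrite mulr0n.
by rewrite expgS IH iotaM mulrS.
Qed.

Lemma iotaV x : ((iota x)^-1)%g = iota (- x).
Proof. by apply: mulg1_eq; rewrite iotaM subrr. Qed.

Lemma iota_inj x y : iota x = iota y -> x = y.
Proof. by case. Qed.

Lemma iota_sum (a b : nat) (F : nat -> A) :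
  (\prod_(a <= i < b) iota (F i))%g = iota (\sum_(a <= i < b) F i).
Proof.
elim/big_rec2: _ => [|i x y _ ->]; first by rewrite oneE.
by rewrite iotaM.
Qed.

Definition sndk (z : E) (k : 'I_n) : nat := z.2 k.

Lemma sndk_lt z k : (sndk z k < N k)%N.
Proof. exact: ltn_ord. Qed.

Lemma sndkM z w k : sndk (z * w)%g k = ((sndk z k + sndk w k) %% N k)%N.
Proof. by rewrite (mkE z) (mkE w) mulE /sndk /= GmulE. Qed.

Lemma sndk1 k : sndk 1%g k = 0%N.
Proof. by rewrite /sndk /= GzE. Qed.

Lemma sndkX z e k : sndk (z ^+ e)%g k = (e * sndk z k %% N k)%N.
Proof.
elim: e => [|e IH]; first by rewrite sndk1 mul0n mod0n.
by rewrite expgS sndkM IH modnDmr mulSn.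
Qed.

Lemma sndkV z k : ((sndk (z^-1)%g k + sndk z k) %% N k = 0)%N.
Proof. by rewrite -sndkM mulVg sndk1. Qed.

Lemma snd0 (z : E) : (forall k, sndk z k = 0%N) -> z = iota z.1.
Proof.
move=> e; rewrite {1}(mkE z) /iota; congr mk.
by apply: Gp_eq => k; rewrite GzE -(e k).
Qed.

Lemma sndk_comm (z w : E) k : sndk [~ z, w]%g k = 0%N.
Proof.
rewrite /commg /conjg !sndkM !modnDmr addnA modnDmr -addnA (addnCA (sndk (w^-1)%g k)) addnA.
by rewrite -modnDm (sndkV z k) (sndkV w k) mod0n.
Qed.

Definition eg (i : 'I_n) : G :=
  @finfun _ (fun k : 'I_n => 'I_(p ^ m k))
    (fun k => Ordinal (ltn_pmod (k == i) (Npos _ _ m hp k))).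
Lemma egE i k : (eg i k : nat) = ((k == i) %% N k)%N.
Proof. by rewrite /eg ffunE. Qed.

Definition u (k : nat) : E := if insub k is Some i then mk 0 (eg i) else 1%g.
Definition Nn (k : nat) : nat := if insub k is Some i then N i else 1%N.
Definition sg (g : G) (k : nat) : nat := if insub k is Some i then (g i : nat) else 0%N.

Lemma uE (i : 'I_n) : u i = mk 0 (eg i). Proof. by rewrite /u valK. Qed.
Lemma NnE (i : 'I_n) : Nn i = N i. Proof. by rewrite /Nn valK. Qed.
Lemma sgE g (i : 'I_n) : sg g i = g i. Proof. by rewrite /sg valK. Qed.

Lemma sndk_u (i : nat) k : sndk (u i) k = if (k == i :> nat) then (1 %% N k)%N else 0%N.
Proof.
rewrite /u; case: insubP => [i' _ <-|/negbTE ni].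
  rewrite /sndk /mk /= egE; case: (k =P i') => [->|ne]; first by rewrite !eqxx.
  case: eqP => [e|_]; [by case: ne; apply: val_inj | by rewrite mod0n].
rewrite sndk1; case: eqP => // e.
by move: (ltn_ord k); rewrite e ni.
Qed.

Lemma sndk_Pr (s : nat -> nat) r k :
  sndk (Pr u s r) k = if (k < r)%N then (s k %% N k)%N else 0%N.
Proof.
elim: r => [|r IH]; first by rewrite Pr0 sndk1.
rewrite PrS sndkM sndkX sndk_u IH ltnS (leq_eqVlt k r).
case: (@eqP _ (k : nat) r) => [e|ne] /=.
  by rewrite -e ltnn add0n modnMmr muln1 modn_mod.
by rewrite muln0 mod0n addn0; case: ifP => _; rewrite ?modn_mod ?mod0n.
Qed.

Definition sigma (g : G) : E := Pr u (sg g) n.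

Lemma sigma2 g : (sigma g).2 = g.
Proof.
apply: Gp_eq => k; have := sndk_Pr (sg g) n k; rewrite /sndk => ->.
by rewrite ltn_ord sgE modn_small.
Qed.

Lemma cc_u i j : central [~ u i, u j]%g.
Proof.
rewrite (snd0 [~ u i, u j]%g); first exact: iota_central.
by move=> k; exact: sndk_comm.
Qed.

Lemma sndk_uN i k : sndk (u i ^+ Nn i)%g k = 0%N.
Proof.
rewrite sndkX sndk_u; case: eqP => [e|_]; last by rewrite muln0 mod0n.
by rewrite -e NnE modnMr.
Qed.

Lemma cN_u i : central (u i ^+ Nn i)%g.
Proof. by rewrite (snd0 _ (sndk_uN i)); exact: iota_central. Qed.


Definition a' (k : nat) : A := ((u k ^+ Nn k)%g).1.
Definition b' (i j : nat) : A := ([~ u i, u j]%g).1.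

Lemma uN_iota k : (u k ^+ Nn k)%g = iota (a' k).
Proof. by rewrite {1}(snd0 _ (sndk_uN k)). Qed.
Lemma comm_iota i j : [~ u i, u j]%g = iota (b' i j).
Proof. by rewrite {1}(snd0 _ (sndk_comm _ _)). Qed.

Lemma sigma_mul g h :
  (sigma g * sigma h)%g = (iota (\sum_(0 <= i < n) a' i *+ ((sg g i + sg h i) %/ Nn i)
      - \sum_(0 <= j < n) \sum_(0 <= i < j) b' i j *+ (sg h i * sg g j)) * sigma (Gm g h))%g.
Proof.
rewrite /sigma (prod_formula (N := Nn)); [|exact: cc_u|exact: cN_u].
rewrite -iotaM; congr (_ * _)%g; last first.
  apply: eq_big_nat => i /andP[_ lt]; congr (_ ^+ _)%g.
  by rewrite -[i]/(nat_of_ord (Ordinal lt)) !sgE NnE GmulE.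
congr (_ * _)%g.
  rewrite -iota_sum; apply: eq_bigr => i _.
  by rewrite uN_iota iotaX.
rewrite -sumrN -iota_sum; apply: eq_bigr => j _.
rewrite -sumrN -iota_sum; apply: eq_bigr => i _.
by rewrite -invg_comm comm_iota iotaV iotaX mulNrn.
Qed.

Definition aa (i : 'I_n) : A := a' i.
Definition bb (i j : 'I_n) : A := b' i j.

Lemma S1 g h : \sum_(0 <= i < n) a' i *+ ((sg g i + sg h i) %/ Nn i)
  = \sum_(i < n) aa i *+ ((g i + h i) %/ N i).
Proof. by rewrite big_mkord; apply: eq_bigr => i _; rewrite !sgE NnE. Qed.

Lemma S2 g h : \sum_(0 <= j < n) \sum_(0 <= i < j) b' i j *+ (sg h i * sg g j)
  = \sum_(i < n) \sum_(j < n | (i < j)%N) bb i j *+ (h i * g j).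
Proof.
rewrite big_mkord.
transitivity (\sum_(j < n) \sum_(i < n | (i < j)%N) bb i j *+ (h i * g j)).
  apply: eq_bigr => j _; rewrite big_mkord (big_ord_narrow (ltnW (ltn_ord j))).
  apply: eq_bigr => i _; congr (_ *+ (_ * _)).
    exact: (sgE h (widen_ord (ltnW (ltn_ord j)) i)).
  exact: sgE.
by rewrite (exchange_big_dep predT).
Qed.

Lemma sigma_mul_ord g h :
  (sigma g * sigma h)%g = (iota (alpha p n m A aa bb g h) * sigma (Gm g h))%g.
Proof. by rewrite sigma_mul S1 S2. Qed.

Lemma valid_bb : valid_b p n m A bb.
Proof.
move=> i j _; apply: iota_inj; rewrite -iotaX /bb -comm_iota -NnE.
rewrite -commXg; last exact/commute_sym/cc_u.
by apply/eqP/commgP; exact: cN_u.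
Qed.

Lemma part2_norm : cohomologous p n m A f (alpha p n m A aa bb).
Proof.
pose c g := (sigma g).1.
have E1 g h : c g + c h + f g h = alpha p n m A aa bb g h + c (Gm g h).
  have := sigma_mul_ord g h.
  rewrite (mkE (sigma g)) (mkE (sigma h)) (mkE (sigma (Gm g h))) !sigma2 /iota !mulE.
  rewrite (proj1 (cocycle_f0 _ _ _ _ _ _ hf h0 _)) addr0.
  by case.
exists (fun g => - c g) => g h.
have -> : f g h = alpha p n m A aa bb g h + c (Gm g h) - c g - c h.
  by rewrite -E1 -addrA -opprD (addrC (c g + c h)) addrK.
set al := alpha p n m A aa bb g h; set x := c (Gm g h); set y := c g; set z := c h.
rewrite opprK (addrAC _ (- z) (- al)) (addrAC _ (- y) (- al)) (addrAC al x (- al)) subrr add0r.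
by rewrite addrAC (addrC x).
Qed.

End Part2.


Lemma subrACA' (V : zmodType) (x y z w : V) : (x - y) - (z - w) = (x - z) - (y - w).
Proof. by rewrite !opprB addrACA [RHS]addrACA (addrC (- y)). Qed.

Lemma comb4 (V : zmodType) (x1 x2 x3 x4 y1 y2 y3 y4 : V) :
  x1 + x3 = x2 + x4 -> y1 + y3 = y2 + y4 ->
  (x1 - y1) - (x2 - y2) + (x3 - y3) - (x4 - y4) = 0.
Proof.
move=> ex ey.
rewrite -addrA subrACA' subrACA' addrACA -opprD.
by rewrite addrACA -opprD [X in _ - X]addrACA -opprD ex ey subrr.
Qed.

Lemma mulrn_mod (V : zmodType) (b : V) N x : b *+ N = 0 -> b *+ x = b *+ (x %% N).
Proof.
move=> e; rewrite {1}(divn_eq x N) mulrnDr mulnC mulrnA e mul0rn add0r //.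
Qed.

Lemma carry_eq N x y z : (0 < N)%N ->
  ((x + y) %/ N + ((x + y) %% N + z) %/ N = (x + y + z) %/ N)%N.
Proof.
move=> N0; rewrite [in RHS](divn_eq (x + y) N) -addnA divnMDl //.
Qed.

Lemma carry_eq' N x y z : (0 < N)%N ->
  ((y + z) %/ N + (x + (y + z) %% N) %/ N = (x + y + z) %/ N)%N.
Proof.
move=> N0; rewrite -addnA [in RHS](divn_eq (y + z) N) addnCA divnMDl // addnC.
Qed.

Section Alpha.
Variables (p n : nat) (m : 'I_n -> nat) (A : finZmodType).
Local Notation G := (Gp p n m).
Local Notation N i := (p ^ m i)%N.
Local Notation Gm := (Gmul p n m).

Definition Cs (a : 'I_n -> A) (s t : G) := \sum_(i < n) a i *+ ((s i + t i) %/ N i).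
Definition Bs (b : 'I_n -> 'I_n -> A) (s t : G) :=
  \sum_(i < n) \sum_(j < n | (i < j)%N) b i j *+ (t i * s j).

Lemma alphaE a b s t : alpha p n m A a b s t = Cs a s t - Bs b s t.
Proof. by []. Qed.

Lemma Cs_cocycle (hp : (0 < p)%N) a g h k :
  Cs a h k + Cs a g (Gm h k) = Cs a (Gm g h) k + Cs a g h.
Proof.
rewrite /Cs -!big_split /=; apply: eq_bigr => i _.
rewrite -!mulrnDr !GmulE; congr (_ *+ _).
by rewrite carry_eq' ?Npos // [RHS]addnC carry_eq ?Npos.
Qed.

Lemma Bs_cocycle (hmono : forall i j : 'I_n, (i <= j)%N -> (m i <= m j)%N) b :
  valid_b p n m A b -> forall g h k,
  Bs b h k + Bs b g (Gm h k) = Bs b (Gm g h) k + Bs b g h.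
Proof.
move=> vb g h k; rewrite /Bs -!big_split /=; apply: eq_bigr => i _.
rewrite -!big_split /=; apply: eq_bigr => j lt.
rewrite -!mulrnDr !GmulE (@mulrn_mod _ _ _ _ (vb i j lt)).
rewrite [in RHS](@mulrn_mod _ _ _ _ (vb i j lt)); congr (_ *+ _).
have dv : (N i %| N j)%N by rewrite dvdn_exp2l // hmono // ltnW.
rewrite -modnDm modnMml modnDm -[in RHS]modnDml.
rewrite -modnMmr (modn_dvdm _ dv) modnMmr modnDml.
congr (_ %% _)%N; rewrite mulnDl mulnDr; lia.
Qed.

Lemma alpha_cocycle (hp : (0 < p)%N)
  (hmono : forall i j : 'I_n, (i <= j)%N -> (m i <= m j)%N) a b :
  valid_b p n m A b -> is_cocycle p n m A (alpha p n m A a b).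
Proof.
move=> vb g h k; rewrite !alphaE; apply: comb4.
  exact: Cs_cocycle.
exact: Bs_cocycle.
Qed.

Definition egx (hp : (0 < p)%N) (i : 'I_n) (x : nat) : G :=
  @finfun _ (fun k : 'I_n => 'I_(p ^ m k))
    (fun k => Ordinal (ltn_pmod (if k == i then x else 0)%N (Npos _ _ m hp k))).

Lemma egxE hp i x k : (egx hp i x k : nat) = (if k == i then x %% N k else 0)%N.
Proof. by rewrite /egx ffunE /=; case: (k == i); rewrite ?mod0n. Qed.

Lemma egx_mul hp i x y : Gm (egx hp i x) (egx hp i y) = egx hp i ((x + y) %% N i).
Proof.
apply: Gp_eq => k; rewrite GmulE !egxE; case: eqP => [->|_]; last by rewrite mod0n.
by rewrite modnDm modn_mod.
Qed.

Lemma Cs_egx hp a i x y : (x < N i)%N -> (y < N i)%N ->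
  Cs a (egx hp i x) (egx hp i y) = a i *+ ((x + y) %/ N i).
Proof.
move=> lx ly; rewrite /Cs (bigD1 i) //= big1 ?addr0 => [|k /negbTE ne].
  by rewrite !egxE eqxx !modn_small.
by rewrite !egxE ne div0n mulr0n.
Qed.

Lemma Bs_egx hp b i x y : Bs b (egx hp i x) (egx hp i y) = 0.
Proof.
rewrite /Bs big1 // => k _; rewrite big1 // => l lt; rewrite !egxE.
case: eqP => [ek|_]; last by rewrite mul0n mulr0n.
case: eqP => [el|_]; last by rewrite muln0 mulr0n.
by move: lt; rewrite ek el ltnn.
Qed.

Lemma alpha_egx hp a b i x y : (x < N i)%N -> (y < N i)%N ->
  alpha p n m A a b (egx hp i x) (egx hp i y) = a i *+ ((x + y) %/ N i).
Proof. by move=> lx ly; rewrite alphaE Cs_egx // Bs_egx subr0. Qed.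

Lemma coboundary_a (hp : (0 < p)%N) a b (c : G -> A) i :
  (forall g h, alpha p n m A a b g h = c h - c (Gm g h) + c g) ->
  (1 < N i)%N -> in_pmul A p (m i) (a i).
Proof.
move=> ec N1; pose d x := c (egx hp i x).
have N0 : (0 < N i)%N by exact: ltnW.
have d0 : d 0%N = 0.
  have := ec (egx hp i 0) (egx hp i 0); rewrite alpha_egx // egx_mul add0n div0n mod0n mulr0n.
  by rewrite subrr add0r /d => <-.
have dS y : (y.+1 < N i)%N -> d y.+1 = d y + d 1%N.
  move=> ly; have := ec (egx hp i 1) (egx hp i y).
  rewrite alpha_egx // ?(ltn_trans _ ly) // egx_mul add1n divn_small // mulr0n modn_small //.
  by move/eqP; rewrite eq_sym addrAC subr_eq0 => /eqP.
have dk y : (y < N i)%N -> d y = d 1%N *+ y.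
  elim: y => [|y IH] ly; first by rewrite d0 mulr0n.
  by rewrite dS // IH ?(ltn_trans _ ly) // mulrSr.
exists (d 1%N).
have := ec (egx hp i 1) (egx hp i (N i).-1).
have lp : ((N i).-1 < N i)%N by rewrite prednK.
rewrite alpha_egx // egx_mul add1n prednK // divnn N0 mulr1n modnn.
rewrite -/(d _) -/(d _) -/(d _) d0 subr0 dk // -mulrSr prednK // => ->.
Qed.

Lemma egx1E (hp : (0 < p)%N) i k : (1 < N k)%N -> (egx hp i 1 k : nat) = (k == i).
Proof. by move=> N1; rewrite egxE; case: eqP => _ //; rewrite modn_small. Qed.

Lemma Cs_e (hp : (0 < p)%N) a x y : (forall k, 1 < N k)%N -> x != y ->
  Cs a (egx hp x 1) (egx hp y 1) = 0.
Proof.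
move=> N1 nxy; rewrite /Cs big1 // => k _; rewrite !egx1E //.
rewrite divn_small ?mulr0n //.
case: (k =P x) => [ekx|_]; case: (k =P y) => [eky|_] /=; [ by move: nxy; rewrite -ekx -eky eqxx | exact: N1 | exact: N1 | exact: ltnW (N1 k)].
Qed.

Lemma Bs_e (hp : (0 < p)%N) b x y : (forall k, 1 < N k)%N ->
  Bs b (egx hp x 1) (egx hp y 1) = if (y < x)%N then b y x else 0.
Proof.
move=> N1; rewrite /Bs (bigD1 y) //= [X in _ + X]big1 ?addr0; last first.
  by move=> k ne; apply: big1 => l _; rewrite egx1E // (negbTE ne) mul0n mulr0n.
rewrite egx1E // eqxx.
case: ifP => lt.
  rewrite (bigD1 x) //= egx1E // eqxx mul1n mulr1n [X in _ + X]big1 ?addr0 // => l /andP[_ ne].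
  by rewrite egx1E // (negbTE ne) muln0 mulr0n.
apply: big1 => l ylt; rewrite egx1E //; case: eqP => [e|_]; last by rewrite muln0 mulr0n.
by move: lt; rewrite -e ylt.
Qed.

Lemma coboundary_b (hp : (0 < p)%N) a b (c : G -> A) (i j : 'I_n) :
  (forall g h, alpha p n m A a b g h = c h - c (Gm g h) + c g) ->
  (forall k, 1 < N k)%N -> (i < j)%N -> b i j = 0.
Proof.
move=> ec N1 lt.
have nij : j != i by rewrite neq_ltn lt orbT.
have e1 := ec (egx hp j 1) (egx hp i 1).
have e2 := ec (egx hp i 1) (egx hp j 1).
rewrite !alphaE !Cs_e // 1?eq_sym // !Bs_e // lt ltnNge (ltnW lt) /= in e1 e2.
rewrite sub0r subr0 in e1 e2.
apply/eqP; rewrite -oppr_eq0 e1 e2 GmulC addrAC [X in _ == X]addrAC.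
by rewrite (addrC (c (egx hp j 1))).
Qed.

Lemma coboundary_of (a : 'I_n -> A) b :
  (forall i, in_pmul A p (m i) (a i)) -> (forall i j : 'I_n, (i < j)%N -> b i j = 0) ->
  is_coboundary p n m A (alpha p n m A a b).
Proof.
move=> ha hb.
pose y i := if [pick z | a i == z *+ N i] is Some z then z else 0.
have ey i : a i = y i *+ N i.
  rewrite /y; case: pickP => [z /eqP //|none].
  by have [z ez] := ha i; have := none z; rewrite ez eqxx.
exists (fun g : G => \sum_(i < n) y i *+ (g i : nat)) => g h.
rewrite alphaE /Bs big1 ?subr0 => [|i _]; last by apply: big1 => j lt; rewrite hb // mul0rn.
rewrite /Cs -sumrB -big_split /=; apply: eq_bigr => i _.
have E : y i *+ g i + y i *+ h i = (y i *+ N i) *+ ((g i + h i) %/ N i) + y i *+ ((g i + h i) %% N i).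
  by rewrite -mulrnDr {1}(divn_eq (g i + h i) (N i)) mulrnDr mulnC mulrnA.
by rewrite GmulE ey addrAC (addrC (y i *+ h i)) E addrK.
Qed.
End Alpha.


Lemma cob_ext p n m (A : finZmodType) (F F' : Gp p n m -> Gp p n m -> A) :
  (forall g h, F g h = F' g h) -> is_coboundary p n m A F -> is_coboundary p n m A F'.
Proof. by move=> e [c ec]; exists c => g h; rewrite -e. Qed.

Lemma alpha_sub p n m (A : finZmodType) a a' b b' g h :
  alpha p n m A a b g h - alpha p n m A a' b' g h =
  alpha p n m A (fun i => a i - a' i) (fun i j => b i j - b' i j) g h.
Proof.
rewrite !alphaE subrACA' /Cs /Bs -sumrB; congr (_ - _).
  by apply: eq_bigr => i _; rewrite mulrnBl.
rewrite -sumrB; apply: eq_bigr => i _; rewrite -sumrB.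
by apply: eq_bigr => j _; rewrite mulrnBl.
Qed.

Lemma part2 p n m (A : finZmodType) (hp : (0 < p)%N) (f : Gp p n m -> Gp p n m -> A) :
  is_cocycle p n m A f ->
  exists (a : 'I_n -> A) (b : 'I_n -> 'I_n -> A),
    valid_b p n m A b /\ cohomologous p n m A f (alpha p n m A a b).
Proof.
move=> hf; set k := f (Gz p n m hp) (Gz p n m hp).
pose f0 g h := f g h - k.
have hf0 : is_cocycle p n m A f0.
  move=> g h l; rewrite /f0; apply: comb4 => //.
  by rewrite -(cocycle_eq _ _ _ _ _ hf) addrC.
have h00 : f0 (Gz p n m hp) (Gz p n m hp) = 0 by rewrite /f0 subrr.
exists (aa p n m A hp f0 hf0 h00), (bb p n m A hp f0 hf0 h00); split; first exact: valid_bb.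
have [c0 ec0] := part2_norm p n m A hp f0 hf0 h00.
exists (fun g => c0 g + k) => g h.
rewrite [in RHS]opprD [c0 h + k + _]addrACA subrr addr0 addrA -ec0 /f0.
by rewrite (addrAC (f g h - k)) subrK.
Qed.

Theorem lemma2p1 (p n : nat) (m : 'I_n -> nat) (A : finZmodType) :
  prime p ->
  (forall i : 'I_n, 1 <= m i)%N ->
  (forall i j : 'I_n, (i <= j)%N -> (m i <= m j)%N) ->
  p.-nat #|A| ->
  [/\ (forall (a : 'I_n -> A) (b : 'I_n -> 'I_n -> A),
         valid_b p n m A b -> is_cocycle p n m A (alpha p n m A a b)),
      (forall f : Gp p n m -> Gp p n m -> A, is_cocycle p n m A f ->
         exists (a : 'I_n -> A) (b : 'I_n -> 'I_n -> A),
           valid_b p n m A b /\ cohomologous p n m A f (alpha p n m A a b)),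
      (forall (a : 'I_n -> A) (b : 'I_n -> 'I_n -> A), valid_b p n m A b ->
         (is_coboundary p n m A (alpha p n m A a b) <->
          (forall i : 'I_n, in_pmul A p (m i) (a i)) /\
          (forall i j : 'I_n, (i < j)%N -> b i j = 0)))
    & (forall (a a' : 'I_n -> A) (b b' : 'I_n -> 'I_n -> A),
         valid_b p n m A b -> valid_b p n m A b' ->
         (cohomologous p n m A (alpha p n m A a b) (alpha p n m A a' b') <->
          (forall i : 'I_n, in_pmul A p (m i) (a i - a' i)) /\
          (forall i j : 'I_n, (i < j)%N -> b i j = b' i j)))].
Proof.
move=> pp m1 hmono _.
have hp : (0 < p)%N by exact: prime_gt0.
have N1 : forall k : 'I_n, (1 < p ^ m k)%N.
  by move=> k; rewrite -{1}(expn0 p) ltn_exp2l ?prime_gt1 // m1.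
have P3 : forall (a : 'I_n -> A) (b : 'I_n -> 'I_n -> A),
    is_coboundary p n m A (alpha p n m A a b) <->
    (forall i : 'I_n, in_pmul A p (m i) (a i)) /\
    (forall i j : 'I_n, (i < j)%N -> b i j = 0).
  move=> a b; split; last by case=> ha hb; exact: coboundary_of.
  case=> c ec; split.
    by move=> i; exact: (coboundary_a _ _ _ _ hp _ _ _ _ ec (N1 i)).
  by move=> i j lt; exact: (coboundary_b _ _ _ _ hp _ _ _ _ _ ec N1 lt).
split.
- by move=> a b vb; exact: (alpha_cocycle _ _ _ _ hp hmono).
- by move=> f hf; exact: (part2 _ _ _ _ hp).
- by move=> a b _; exact: P3.
move=> a a' b b' vb vb'; rewrite /cohomologous; split.
  move/(cob_ext _ _ _ _ _ _ (alpha_sub _ _ _ _ a a' b b'))/P3 => [ha hb]; split => //.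
  by move=> i j lt; apply/eqP; rewrite -subr_eq0; apply/eqP; exact: hb.
case=> ha hb; apply: (cob_ext _ _ _ _ _ _ (fun g h => esym (alpha_sub _ _ _ _ a a' b b' g h))).
apply/P3; split => // i j lt; by rewrite hb // subrr.
Qed.
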